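(* Let $a<b$, $c<d$ be real numbers and $C\in\mathbb{R}\setminus\{0\}$. Let $(p_n)_{n\in\mathbb{N}_0}$ and $(q_n)_{n\in\mathbb{N}_0}$ be real sequences with $p_0=q_0$ such that the power series $\sigma(s)=\sum_{n\ge 0}p_n(s-a)^n$ and $\tau(t)=\sum_{n\ge0}q_n(t-c)^n$ converge uniformly on $[a,b]$ and $[c,d]$ respectively. Let $k:[a,b]\times[c,d]\to\mathbb{R}$ be the solution of the Goursat problem $$\frac{\partial^2 k}{\partial s\,\partial t}=Ck \text{ on } [a,b]\times[c,d],\qquad k(s,c)=\sigma(s),\quad k(a,t)=\tau(t).$$ Then, writing $\Delta_{a,b}=b-a$ and $\Delta_{c,d}=d-c$, one has $k(s,d)=\sum_{n\ge0}\tilde p_n(s-a)^n$ for $s\in[a,b]$ and $k(b,t)=\sum_{n\ge0}\tilde q_n(t-c)^n$ for $t\in[c,d]$, where for all $n\in\mathbb{N}_0$ $$\tilde p_n=\sum_{k=0}^{n}p_k\frac{(C\Delta_{c,d})^{n-k}\,k!}{(n-k)!\,n!}+\sum_{k=1}^{\infty}q_k\frac{C^n\Delta_{c,d}^{\,n+k}\,k!}{(n+k)!\,n!},$$ $$\tilde q_n=\sum_{k=0}^{n}q_k\frac{(C\Delta_{a,b})^{n-k}\,k!}{(n-k)!\,n!}+\sum_{k=1}^{\infty}p_k\frac{C^n\Delta_{a,b}^{\,n+k}\,k!}{(n+k)!\,n!}.$$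
   Context: By the solution of the Goursat problem is meant the continuous function $k$ on $[a,b]\times[c,d]$ satisfying $k(s,t)=\sigma(s)+\tau(t)-\sigma(a)+C\int_a^s\int_c^t k(r,w)\,dw\,dr$ for all $(s,t)$ in the rectangle (equivalently, the classical solution given by the Riemann-function representation with $I_0$, the zero-order modified Bessel function of the first kind). *)

(* Defs.v *)
From Stdlib Require Import Reals Lra Lia.
From Coquelicot Require Import Coquelicot.
Open Scope R_scope.

Definition unif_conv_pseries (p : nat -> R) (x0 lo hi : R) (f : R -> R) : Prop :=
  forall eps : R, 0 < eps ->
    exists N : nat, forall n : nat, (N <= n)%nat ->
      forall x : R, lo <= x <= hi ->
        Rabs (sum_f_R0 (fun j => p j * (x - x0) ^ j) n - f x) < eps.

Definition cont_on_rect (k : R -> R -> R) (a b c d : R) : Prop :=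
  forall s t : R, a <= s <= b -> c <= t <= d ->
    forall eps : R, 0 < eps -> exists delta : R, 0 < delta /\
      forall s' t' : R, a <= s' <= b -> c <= t' <= d ->
        Rabs (s' - s) < delta -> Rabs (t' - t) < delta ->
        Rabs (k s' t' - k s t) < eps.

(* k is the solution of the Goursat problem  k_st = C k,
   k(s,c) = sigma s, k(a,t) = tau t, in integral form. *)
Definition goursat_solution (C a b c d : R) (sigma tau : R -> R)
    (k : R -> R -> R) : Prop :=
  cont_on_rect k a b c d /\
  forall s t : R, a <= s <= b -> c <= t <= d ->
    k s t = sigma s + tau t - sigma a
            + C * RInt (fun r => RInt (fun w => k r w) c t) a s.

Definition coef_fin (p : nat -> R) (C D : R) (n : nat) : R :=
  sum_f_R0 (fun j => p j * (C * D) ^ (n - j) * INR (Factorial.fact j)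
                     / (INR (Factorial.fact (n - j)) * INR (Factorial.fact n))) n.

(* j-th term (j = 0,1,...) of the infinite part, corresponding to index k = j+1:
   q_k C^n D^(n+k) k! / ((n+k)! n!) *)
Definition coef_inf_term (q : nat -> R) (C D : R) (n j : nat) : R :=
  q (S j) * C ^ n * D ^ (n + S j) * INR (Factorial.fact (S j))
    / (INR (Factorial.fact (n + S j)) * INR (Factorial.fact n)).

(* Main.v *)
Require Import Defs.
From Stdlib Require Import Reals Lra Lia FunctionalExtensionality.
From Coquelicot Require Import Coquelicot.
Open Scope R_scope.


Lemma cont_eps (f : R -> R) (x : R) :
  (forall eps, 0 < eps -> exists delta, 0 < delta /\
     forall y, Rabs (y - x) < delta -> Rabs (f y - f x) < eps) ->
  continuous f x.
Proof.
  intros H. apply continuity_pt_filterlim.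
  intros eps Heps. destruct (H eps Heps) as [dl [Hd Hy]].
  exists dl. split; [exact Hd|]. intros y [_ Hy2]. apply Hy. exact Hy2.
Qed.

Lemma c_plus (f g : R -> R) x : continuous f x -> continuous g x ->
  continuous (fun y => f y + g y) x.
Proof. intros. exact (continuous_plus f g x H H0). Qed.
Lemma c_minus (f g : R -> R) x : continuous f x -> continuous g x ->
  continuous (fun y => f y - g y) x.
Proof. intros. exact (continuous_minus f g x H H0). Qed.
Lemma c_mult (f g : R -> R) x : continuous f x -> continuous g x ->
  continuous (fun y => f y * g y) x.
Proof. intros. exact (continuous_mult f g x H H0). Qed.
Lemma c_const (v : R) x : continuous (fun _ : R => v) x.
Proof. exact (continuous_const v x). Qed.
Lemma c_pow (lo : R) n x : continuous (fun r => (r - lo) ^ n) x.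
Proof. apply (ex_derive_continuous (K:=R_AbsRing) (V:=R_NormedModule) (fun r => (r - lo) ^ n)). auto_derive. trivial. Qed.

Lemma ex_RInt_c (f : R -> R) lo hi : (forall x, continuous f x) -> ex_RInt f lo hi.
Proof. intros H. apply (ex_RInt_continuous (V:=R_CompleteNormedModule)). intros; apply H. Qed.

Lemma RInt_plus' (f g : R -> R) lo hi : ex_RInt f lo hi -> ex_RInt g lo hi ->
  RInt (fun x => f x + g x) lo hi = RInt f lo hi + RInt g lo hi.
Proof. intros. exact (RInt_plus f g lo hi H H0). Qed.
Lemma RInt_minus' (f g : R -> R) lo hi : ex_RInt f lo hi -> ex_RInt g lo hi ->
  RInt (fun x => f x - g x) lo hi = RInt f lo hi - RInt g lo hi.
Proof. intros. exact (RInt_minus f g lo hi H H0). Qed.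
Lemma RInt_scal' (f : R -> R) lo hi l : ex_RInt f lo hi ->
  RInt (fun x => l * f x) lo hi = l * RInt f lo hi.
Proof. intros. exact (RInt_scal f lo hi l H). Qed.

Lemma RInt_mono (n : nat) lo s :
  RInt (fun r => (r - lo) ^ n) lo s = (s - lo) ^ (S n) / INR (S n).
Proof.
  apply is_RInt_unique.
  replace ((s - lo) ^ S n / INR (S n)) with
    (minus ((fun r => (r - lo) ^ S n / INR (S n)) s) ((fun r => (r - lo) ^ S n / INR (S n)) lo)).
  2:{ unfold minus, plus, opp; simpl. rewrite Rminus_diag. lra. }
  apply (is_RInt_derive (V:=R_CompleteNormedModule) (fun r => (r - lo) ^ S n / INR (S n))).
  - intros x _. auto_derive. trivial.
    change (match n with 0%nat => 1 | S _ => INR n + 1 end) with (INR (S n)).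
    replace (x + - lo) with (x - lo) by ring.
    field. apply not_0_INR. lia.
  - intros. apply c_pow.
Qed.

Lemma RInt_abs_bound (f g : R -> R) lo hi : lo <= hi -> ex_RInt f lo hi -> ex_RInt g lo hi ->
  (forall x, lo <= x <= hi -> Rabs (f x) <= g x) -> Rabs (RInt f lo hi) <= RInt g lo hi.
Proof.
  intros Hle Hf Hg H.
  assert (Hg' : ex_RInt (fun x => - g x) lo hi).
  { apply (ex_RInt_opp g) in Hg. exact Hg. }
  apply Rabs_le. split.
  - replace (- RInt g lo hi) with (RInt (fun x => - g x) lo hi).
    + apply RInt_le; auto. intros x Hx. specialize (H x ltac:(lra)).
      apply Rabs_le_between in H. lra.
    + exact (RInt_opp g lo hi Hg).
  - apply RInt_le; auto. intros x Hx. specialize (H x ltac:(lra)).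
    apply Rabs_le_between in H. lra.
Qed.

Lemma sum_mono (f : nat -> R) L L' : (forall m, 0 <= f m) -> (L <= L')%nat ->
  sum_f_R0 f L <= sum_f_R0 f L'.
Proof.
  intros H Hl. induction Hl. lra. simpl. specialize (H (S m)). lra.
Qed.

Lemma sum_rev (h : nat -> R) n :
  sum_f_R0 h n = sum_f_R0 (fun m => h (n - m)%nat) n.
Proof.
  revert h. induction n; intros h. simpl. reflexivity.
  rewrite (decomp_sum h (S n)) by lia. simpl pred.
  rewrite IHn. simpl sum_f_R0 at 2. rewrite Nat.sub_diag.
  rewrite Rplus_comm. f_equal. apply sum_eq. intros i Hi.
  f_equal. destruct i; lia.
Qed.

Lemma sumS (f : nat -> R) N : sum_f_R0 f (S N) = sum_f_R0 f N + f (S N).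
Proof. reflexivity. Qed.

Lemma sum_diag (g : nat -> nat -> R) N :
  sum_f_R0 (fun j => sum_f_R0 (fun m => g j m) (N - j)%nat) N =
  sum_f_R0 (fun n => sum_f_R0 (fun j => g j (n - j)%nat) n) N.
Proof.
  induction N. simpl. reflexivity.
  rewrite (sumS (fun n => sum_f_R0 (fun j => g j (n - j)%nat) n)).
  rewrite <- IHN. rewrite sumS. rewrite Nat.sub_diag.
  rewrite (sumS (fun j => g j (S N - j)%nat)). rewrite Nat.sub_diag.
  replace (sum_f_R0 (fun j => sum_f_R0 (fun m => g j m) (S N - j)) N) with
    (sum_f_R0 (fun j => sum_f_R0 (fun m => g j m) (N - j) + g j (S N - j)%nat) N).
  2:{ apply sum_eq. intros i Hi. replace (S N - i)%nat with (S (N - i)) by lia. rewrite sumS. reflexivity. }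
  rewrite plus_sum. simpl sum_f_R0 at 4. ring.
Qed.

Lemma conv0 (gam : nat -> R) (dd : nat -> nat -> R) (E : R) :
  (forall j, 0 <= gam j) -> (forall N, sum_f_R0 gam N <= E) -> Un_cv gam 0 ->
  (forall eps, 0 < eps -> exists L0 H,
      (forall N j, (j <= N)%nat -> Rabs (dd N j) <= gam j * H) /\
      (forall N j, (j <= N)%nat -> (L0 <= N - j)%nat -> Rabs (dd N j) <= gam j * eps)) ->
  forall eps, 0 < eps -> exists N0, forall N, (N0 <= N)%nat ->
     Rabs (sum_f_R0 (dd N) N) < eps.
Proof.
  intros Hg HE Hcv Hd eps Heps.
  assert (HE0 : 0 <= E) by (specialize (HE 0%nat); specialize (Hg 0%nat); simpl in HE; lra).
  set (e1 := eps / (2 * (E + 1))).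
  assert (He1 : 0 < e1) by (unfold e1; apply Rdiv_lt_0_compat; lra).
  destruct (Hd e1 He1) as [L0 [H [HdH Hde]]].
  set (H' := Rabs H + 1).
  assert (HdH' : forall N j, (j <= N)%nat -> Rabs (dd N j) <= gam j * H').
  { intros N j Hj. eapply Rle_trans. apply HdH; auto. apply Rmult_le_compat_l. apply Hg.
    unfold H'. pose proof (Rle_abs H). lra. }
  assert (HH' : 0 < H') by (unfold H'; pose proof (Rabs_pos H); lra).
  set (e2 := eps / (2 * (INR L0 + 1) * H')).
  assert (He2 : 0 < e2).
  { unfold e2. apply Rdiv_lt_0_compat. lra. pose proof (pos_INR L0).
    apply Rmult_lt_0_compat; lra. }
  destruct (Hcv e2 He2) as [J HJ].
  exists (J + L0)%nat. intros N HN.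
  assert (P1 : forall m, (m <= N)%nat -> (L0 <= N - m)%nat ->
     Rabs (sum_f_R0 (dd N) m) <= E * e1).
  { intros m Hm Hm2. eapply Rle_trans. apply sum_f_R0_triangle.
    eapply Rle_trans. apply (sum_Rle _ (fun j => gam j * e1)).
    intros j Hj. apply Hde; lia.
    rewrite <- scal_sum. rewrite (Rmult_comm E). apply Rmult_le_compat_l. lra. apply HE. }
  assert (HEe1 : E * e1 < eps / 2).
  { unfold e1. apply (Rmult_lt_reg_r (2 * (E+1))). lra.
    field_simplify; lra. }
  destruct L0 as [|L0'].
  - specialize (P1 N (le_n N) ltac:(lia)). lra.
  - rewrite (tech2 (dd N) (N - S L0') N) by lia.
    replace (N - S (N - S L0'))%nat with L0' by lia.
    eapply Rle_lt_trans. apply Rabs_triang.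
    assert (P2 : Rabs (sum_f_R0 (fun i => dd N (S (N - S L0') + i)%nat) L0') <=
                 e2 * H' * INR (S L0')).
    { eapply Rle_trans. apply sum_f_R0_triangle.
      rewrite <- sum_cte. apply sum_Rle. intros i Hi.
      eapply Rle_trans. apply HdH'. lia.
      apply Rmult_le_compat_r. lra.
      specialize (HJ (S (N - S L0') + i)%nat ltac:(lia)).
      unfold R_dist in HJ. rewrite Rminus_0_r in HJ.
      pose proof (Rle_abs (gam (S (N - S L0') + i)%nat)). lra. }
    assert (e2 * H' * INR (S L0') < eps / 2).
    { unfold e2. rewrite S_INR. pose proof (pos_INR L0').
      replace (eps / (2 * (INR L0' + 1 + 1) * H') * H' * (INR L0' + 1)) with
        (eps / 2 * ((INR L0' + 1) / (INR L0' + 1 + 1))) by (field; split; lra).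
      rewrite <- (Rmult_1_r (eps/2)) at 2. apply Rmult_lt_compat_l. lra.
      apply (Rmult_lt_reg_r (INR L0' + 1 + 1)). lra. field_simplify; lra. }
    specialize (P1 (N - S L0')%nat ltac:(lia) ltac:(lia)).
    lra.
Qed.


Fixpoint Iop (lo : R) (f : R -> R) (j : nat) : R -> R :=
  match j with O => f | S j => fun s => RInt (Iop lo f j) lo s end.

Definition allc (f : R -> R) := forall x, continuous f x.

Lemma Iop_cont lo f : allc f -> forall j, allc (Iop lo f j).
Proof.
  intros Hf j. induction j; simpl. exact Hf.
  intros x. apply (continuous_RInt_1 (V:=R_NormedModule) (Iop lo f j) lo x).
  apply filter_forall. intros z. apply (RInt_correct (V:=R_CompleteNormedModule)). apply ex_RInt_c. exact IHj.
Qed.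

Lemma Iop_plus lo f g : allc f -> allc g -> forall j s,
  Iop lo (fun r => f r + g r) j s = Iop lo f j s + Iop lo g j s.
Proof.
  intros Hf Hg j. induction j; intros s; simpl. reflexivity.
  replace (Iop lo (fun r => f r + g r) j) with (fun r => Iop lo f j r + Iop lo g j r)
    by (apply functional_extensionality; intros; rewrite IHj; reflexivity).
  apply RInt_plus'; apply ex_RInt_c; apply Iop_cont; auto.
Qed.

Lemma Iop_scal lo f l : allc f -> forall j s,
  Iop lo (fun r => l * f r) j s = l * Iop lo f j s.
Proof.
  intros Hf j. induction j; intros s; simpl. reflexivity.
  replace (Iop lo (fun r => l * f r) j) with (fun r => l * Iop lo f j r)
    by (apply functional_extensionality; intros; rewrite IHj; reflexivity).
  apply RInt_scal'; apply ex_RInt_c; apply Iop_cont; auto.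
Qed.

Lemma Iop_minus lo f g : allc f -> allc g -> forall j s,
  Iop lo (fun r => f r - g r) j s = Iop lo f j s - Iop lo g j s.
Proof.
  intros Hf Hg j s.
  replace (fun r => f r - g r) with (fun r => f r + (-1) * g r)
    by (apply functional_extensionality; intros; ring).
  rewrite Iop_plus; auto. rewrite Iop_scal; auto. ring.
  intros x. apply c_mult. apply c_const. apply Hg.
Qed.

Lemma fact_S_add n j : INR (Factorial.fact (n + S j)) = INR (S (n + j)) * INR (Factorial.fact (n + j)).
Proof. rewrite Nat.add_succ_r. rewrite fact_simpl. rewrite mult_INR. reflexivity. Qed.

Lemma Iop_mono lo n : forall j s,
  Iop lo (fun r => (r - lo) ^ n) j s =
  INR (Factorial.fact n) / INR (Factorial.fact (n + j)) * (s - lo) ^ (n + j).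
Proof.
  induction j; intros s; simpl.
  - rewrite Nat.add_0_r. field. apply INR_fact_neq_0.
  - replace (Iop lo (fun r => (r - lo) ^ n) j) with
      (fun r => INR (Factorial.fact n) / INR (Factorial.fact (n + j)) * (r - lo) ^ (n + j))
      by (apply functional_extensionality; intros; rewrite IHj; reflexivity).
    rewrite RInt_scal'. 2:{ apply ex_RInt_c. intros x; apply c_pow. }
    rewrite RInt_mono. rewrite fact_S_add. rewrite Nat.add_succ_r.
    field. split. apply INR_fact_neq_0. apply not_0_INR. lia.
Qed.

Definition poly (p : nat -> R) (lo : R) (L : nat) (r : R) :=
  sum_f_R0 (fun m => p m * (r - lo) ^ m) L.

Lemma poly_cont p lo L : allc (poly p lo L).
Proof.
  unfold poly. induction L; intros x; simpl.
  - apply c_mult. apply c_const. apply (c_pow lo 0).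
  - apply c_plus. apply IHL. apply c_mult. apply c_const. apply (c_pow lo (S L)).
Qed.

Lemma Iop_poly p lo L : forall j s,
  Iop lo (poly p lo L) j s =
  sum_f_R0 (fun m => p m * (INR (Factorial.fact m) / INR (Factorial.fact (m + j))) * (s - lo) ^ (m + j)) L.
Proof.
  induction L; intros j s.
  - unfold poly; simpl sum_f_R0. rewrite Iop_scal. rewrite (Iop_mono lo 0). simpl. ring.
    intros x; apply c_const.
  - change (poly p lo (S L)) with (fun r => poly p lo L r + p (S L) * (r - lo) ^ (S L)).
    rewrite Iop_plus. 2: apply poly_cont. 2:{ intros x. apply c_mult. apply c_const. apply (c_pow lo (S L)). }
    rewrite IHL. rewrite Iop_scal. rewrite Iop_mono. rewrite sumS. ring.
    intros x; apply (c_pow lo (S L)).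
Qed.

Lemma Iop_bound lo hi f e : allc f -> (forall r, lo <= r <= hi -> Rabs (f r) <= e) ->
  forall j s, lo <= s <= hi -> Rabs (Iop lo f j s) <= e * (s - lo) ^ j / INR (Factorial.fact j).
Proof.
  intros Hf Hb j. induction j; intros s Hs; simpl.
  - rewrite Rmult_1_r. unfold Rdiv. rewrite Rinv_1. rewrite Rmult_1_r. apply Hb; auto.
  - eapply Rle_trans. apply (RInt_abs_bound _ (fun r => e * (r - lo) ^ j / INR (Factorial.fact j))).
    lra. apply ex_RInt_c; apply Iop_cont; auto.
    apply ex_RInt_c. intros x. apply c_mult. apply c_mult. apply c_const. apply c_pow. apply c_const.
    intros x Hx. apply IHj. lra.
    replace (fun r => e * (r - lo) ^ j / INR (Factorial.fact j)) with
       (fun r => (e / INR (Factorial.fact j)) * (r - lo) ^ j)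
       by (apply functional_extensionality; intros; field; apply INR_fact_neq_0).
    rewrite RInt_scal'. 2:{ apply ex_RInt_c. intros x; apply c_pow. }
    rewrite RInt_mono. right. change (Factorial.fact j + j * Factorial.fact j)%nat with (Factorial.fact (S j)). rewrite fact_simpl. simpl pow. rewrite mult_INR. field. split. apply INR_fact_neq_0. apply not_0_INR. lia.
Qed.

Lemma Iop_series (p : nat -> R) lo hi f : lo <= hi -> allc f ->
  unif_conv_pseries p lo lo hi f ->
  forall eps, 0 < eps -> exists L0, forall L, (L0 <= L)%nat -> forall j s, lo <= s <= hi ->
    Rabs (Iop lo f j s - Iop lo (poly p lo L) j s) <= eps * (s - lo) ^ j / INR (Factorial.fact j).
Proof.
  intros Hlh Hf Hu eps Heps. destruct (Hu eps Heps) as [N HN].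
  exists N. intros L HL j s Hs.
  rewrite <- Iop_minus; auto. 2: apply poly_cont.
  apply (Iop_bound lo hi). intros x. apply c_minus. apply Hf. apply poly_cont.
  intros r Hr. rewrite Rabs_minus_sym. left. apply HN; auto. exact Hs.
Qed.


Definition clamp lo hi x := Rmax lo (Rmin hi x).

Lemma clamp_in lo hi x : lo <= hi -> lo <= clamp lo hi x <= hi.
Proof. intros. unfold clamp, Rmax, Rmin. repeat destruct Rle_dec; lra. Qed.
Lemma clamp_id lo hi x : lo <= x <= hi -> clamp lo hi x = x.
Proof. intros. unfold clamp, Rmax, Rmin. repeat destruct Rle_dec; lra. Qed.
Lemma clamp_lip lo hi x y : lo <= hi -> Rabs (clamp lo hi x - clamp lo hi y) <= Rabs (x - y).
Proof. intros. unfold clamp, Rmax, Rmin. repeat destruct Rle_dec; unfold Rabs; repeat destruct Rcase_abs; lra. Qed.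

Lemma chain (f : R -> R) lo hi dl : 0 < dl ->
  (forall x y, lo <= x <= hi -> lo <= y <= hi -> Rabs (x - y) < dl -> Rabs (f x - f y) <= 1) ->
  forall n x, lo <= x <= hi -> x <= lo + INR n * (dl / 2) -> Rabs (f x - f lo) <= INR n.
Proof.
  intros Hd Hf n. induction n; intros x Hx Hn.
  - simpl in *. replace x with lo by lra. rewrite Rminus_diag, Rabs_R0. lra.
  - rewrite S_INR in *. destruct (Rle_dec x (lo + INR n * (dl / 2))).
    + specialize (IHn x Hx r). lra.
    + destruct (Rle_dec lo (x - dl/2)) as [Hl|Hl].
      2:{ assert (Rabs (f x - f lo) <= 1). apply Hf; [exact Hx | lra | ]. rewrite Rabs_pos_eq; lra.
          pose proof (pos_INR n). lra. }
      assert (Hx' : lo <= x - dl/2 <= hi) by lra.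
      specialize (IHn (x - dl/2) Hx' ltac:(rewrite Rmult_plus_distr_r in Hn; lra)).
      assert (Rabs (f x - f (x - dl/2)) <= 1).
      { apply Hf; [exact Hx | exact Hx' | ]. replace (x - (x - dl/2)) with (dl/2) by ring. rewrite Rabs_pos_eq; lra. }
      replace (f x - f lo) with ((f x - f (x - dl/2)) + (f (x - dl/2) - f lo)) by ring.
      eapply Rle_trans. apply Rabs_triang. lra.
Qed.

Lemma chain_n lo hi dl : 0 < dl -> lo <= hi -> exists n, hi <= lo + INR n * (dl / 2).
Proof.
  intros Hd Hl. destruct (nfloor_ex ((hi - lo) / (dl / 2))) as [n Hn].
  apply Rdiv_le_0_compat; lra.
  exists (S n). rewrite S_INR. destruct Hn as [_ Hn].
  apply (Rmult_lt_compat_r (dl/2)) in Hn. 2: lra.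
  unfold Rdiv in Hn at 1. rewrite Rmult_assoc, Rinv_l in Hn by lra. lra.
Qed.

Fixpoint sl (f : nat -> R) (N : nat) : R := match N with 0%nat => 0 | S N => sl f N + f N end.

Lemma sl_shift f N : sl f (S N) = f 0%nat + sl (fun j => f (S j)) N.
Proof. induction N; simpl in *. ring. rewrite IHN. ring. Qed.
Lemma sl_sum f N : sl f (S N) = sum_f_R0 f N.
Proof. induction N. simpl. ring. change (sl f (S (S N))) with (sl f (S N) + f (S N)). rewrite IHN. reflexivity. Qed.
Lemma sl_scal l f N : l * sl f N = sl (fun j => l * f j) N.
Proof. induction N; simpl. ring. rewrite <- IHN. ring. Qed.
Lemma sl_cont (F : nat -> R -> R) N : (forall j, allc (F j)) -> allc (fun x => sl (fun j => F j x) N).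
Proof. intros H. induction N; intros x; simpl. apply c_const. apply c_plus. apply IHN. apply H. Qed.
Lemma RInt_sl (F : nat -> R -> R) N lo hi : (forall j, allc (F j)) ->
  RInt (fun x => sl (fun j => F j x) N) lo hi = sl (fun j => RInt (F j) lo hi) N.
Proof.
  intros H. induction N; simpl.
  - rewrite RInt_const. unfold scal; simpl. unfold mult; simpl. ring.
  - rewrite RInt_plus'. rewrite IHN. reflexivity.
    apply ex_RInt_c. apply sl_cont; auto. apply ex_RInt_c. apply H.
Qed.

Section Goursat.
Variables a b c d C : R.
Variable k : R -> R -> R.
Hypothesis Hab : a < b.
Hypothesis Hcd : c < d.
Hypothesis Hcont : cont_on_rect k a b c d.

Definition K s t := k (clamp a b s) (clamp c d t).

Lemma K_eq s t : a <= s <= b -> c <= t <= d -> K s t = k s t.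
Proof. intros. unfold K. rewrite !clamp_id; auto. Qed.

Lemma K_clamp s t : K s t = K (clamp a b s) (clamp c d t).
Proof. unfold K. rewrite (clamp_id a b (clamp a b s)), (clamp_id c d (clamp c d t)); auto; apply clamp_in; lra. Qed.

Lemma K_c2d x y : continuity_2d_pt K x y.
Proof.
  intros eps. destruct (Hcont (clamp a b x) (clamp c d y) ltac:(apply clamp_in; lra)
     ltac:(apply clamp_in; lra) eps (cond_pos eps)) as [dl [Hdl H]].
  exists (mkposreal dl Hdl). intros u v Hu Hv. simpl in *. unfold K.
  apply H. apply clamp_in; lra. apply clamp_in; lra.
  eapply Rle_lt_trans. apply clamp_lip; lra. exact Hu.
  eapply Rle_lt_trans. apply clamp_lip; lra. exact Hv.
Qed.

Lemma K_uc eps : 0 < eps -> exists dl, 0 < dl /\ forall r r' w w',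
  Rabs (r' - r) < dl -> Rabs (w' - w) < dl -> Rabs (K r' w' - K r w) < eps.
Proof.
  intros He. destruct (uniform_continuity_2d K a b c d (fun x y _ _ => K_c2d x y) (mkposreal eps He)) as [dl H].
  exists dl. split. apply cond_pos. intros r r' w w' H1 H2.
  rewrite (K_clamp r' w'), (K_clamp r w). apply H; try (apply clamp_in; lra).
  eapply Rle_lt_trans. apply clamp_lip; lra. exact H1.
  eapply Rle_lt_trans. apply clamp_lip; lra. exact H2.
Qed.

Lemma K_bound : exists B, forall r w, Rabs (K r w) <= B.
Proof.
  destruct (K_uc 1 ltac:(lra)) as [dl [Hdl H]].
  destruct (chain_n a b dl Hdl ltac:(lra)) as [n1 Hn1].
  destruct (chain_n c d dl Hdl ltac:(lra)) as [n2 Hn2].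
  exists (Rabs (K a c) + INR n2 + INR n1). intros r w.
  rewrite K_clamp. set (r0 := clamp a b r). set (w0 := clamp c d w).
  assert (Hr : a <= r0 <= b) by (apply clamp_in; lra).
  assert (Hw : c <= w0 <= d) by (apply clamp_in; lra).
  assert (A1 : Rabs (K r0 w0 - K a w0) <= INR n1).
  { apply (chain (fun x => K x w0) a b dl Hdl); auto.
    intros x y _ _ Hxy. left. apply H. exact Hxy. rewrite Rminus_diag, Rabs_R0. exact Hdl. lra. }
  assert (A2 : Rabs (K a w0 - K a c) <= INR n2).
  { apply (chain (fun y => K a y) c d dl Hdl); auto.
    intros x y _ _ Hxy. left. apply H. rewrite Rminus_diag, Rabs_R0. exact Hdl. exact Hxy. lra. }
  replace (K r0 w0) with ((K r0 w0 - K a w0) + (K a w0 - K a c) + K a c) by ring.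
  eapply Rle_trans. apply Rabs_triang. eapply Rle_trans. apply Rplus_le_compat_r. apply Rabs_triang. lra.
Qed.

Lemma cK_w r : allc (fun w => K r w).
Proof.
  intros w0. apply cont_eps. intros eps He. destruct (K_uc eps He) as [dl [Hdl H]].
  exists dl. split; auto. intros y Hy. apply H; auto. rewrite Rminus_diag, Rabs_R0; auto.
Qed.

Lemma cK_r w : allc (fun r => K r w).
Proof.
  intros w0. apply cont_eps. intros eps He. destruct (K_uc eps He) as [dl [Hdl H]].
  exists dl. split; auto. intros y Hy. apply H; auto. rewrite Rminus_diag, Rabs_R0; auto.
Qed.

Lemma Kint_cont t : c <= t -> allc (fun r => RInt (fun w => K r w) c t).
Proof.
  intros Ht r0. apply cont_eps. intros eps He.
  destruct (K_uc (eps / (t - c + 1)) ltac:(apply Rdiv_lt_0_compat; lra)) as [dl [Hdl H]].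
  exists dl. split; auto. intros y Hy.
  rewrite <- RInt_minus'. 2,3: apply ex_RInt_c; apply cK_w.
  eapply Rle_lt_trans. apply abs_RInt_le_const. exact Ht.
  apply ex_RInt_c. intros x. apply c_minus; apply cK_w.
  intros w Hw. left. apply H. exact Hy. rewrite Rminus_diag, Rabs_R0; auto.
  assert (E1 : eps / (t - c + 1) * (t - c + 1) = eps) by (field; lra).
  assert (0 < eps / (t - c + 1)) by (apply Rdiv_lt_0_compat; lra).
  nra.
Qed.

Definition sc s := K s c.
Definition tc t := K a t.
Definition p0 := K a c.

Lemma sc_cont : allc sc.
Proof. exact (cK_r c). Qed.
Lemma tc_cont : allc tc.
Proof. exact (cK_w a). Qed.

Definition fi j := INR (Factorial.fact j).

Definition u j r w := C ^ j * ((w - c) ^ j / fi j * Iop a sc j r + (r - a) ^ j / fi j * Iop c tc j w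
   - p0 * ((r - a) ^ j * (w - c) ^ j) / (fi j * fi j)).
Definition ui j r t := C ^ j * ((t - c) ^ (S j) / fi (S j) * Iop a sc j r + (r - a) ^ j / fi j * Iop c tc (S j) t
   - p0 * ((r - a) ^ j * (t - c) ^ (S j)) / (fi j * fi (S j))).

Lemma fi_nz j : fi j <> 0.
Proof. apply INR_fact_neq_0. Qed.
Lemma fi_S j : fi (S j) = INR (S j) * fi j.
Proof. unfold fi. rewrite fact_simpl, mult_INR. reflexivity. Qed.

Lemma u_cont_w j r : allc (fun w => u j r w).
Proof.
  intros x. unfold u. apply c_mult. apply c_const. apply c_minus. apply c_plus.
  apply c_mult. apply c_mult. apply c_pow. apply c_const. apply c_const.
  apply c_mult. apply c_const. apply Iop_cont. apply tc_cont.
  apply c_mult. apply c_mult. apply c_const. apply c_mult. apply c_const. apply c_pow. apply c_const.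
Qed.

Lemma ui_cont_r j t : allc (fun r => ui j r t).
Proof.
  intros x. unfold ui. apply c_mult. apply c_const. apply c_minus. apply c_plus.
  apply c_mult. apply c_const. apply Iop_cont. apply sc_cont.
  apply c_mult. apply c_mult. apply c_pow. apply c_const. apply c_const.
  apply c_mult. apply c_mult. apply c_const. apply c_mult. apply c_pow. apply c_const. apply c_const.
Qed.

Ltac cont0 Hc := first [apply c_pow | apply Hc | apply c_const].
Ltac cont1 Hc := first [cont0 Hc | (apply c_mult; [apply c_const| cont0 Hc]) | (apply c_plus; (apply c_mult; [apply c_const| cont0 Hc]))].

Lemma u_int j r t : RInt (fun w => u j r w) c t = ui j r t.
Proof.
  set (al := C ^ j * Iop a sc j r / fi j).
  set (be := C ^ j * (r - a) ^ j / fi j).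
  set (ga := C ^ j * p0 * (r - a) ^ j / (fi j * fi j)).
  replace (fun w => u j r w) with (fun w => (al * (w - c) ^ j + be * Iop c tc j w) - ga * (w - c) ^ j).
  2:{ apply functional_extensionality. intros w. unfold u, al, be, ga. field. apply fi_nz. }
  pose proof (Iop_cont c tc tc_cont j) as Hc.
  rewrite RInt_minus'. rewrite RInt_plus'. rewrite !RInt_scal'. rewrite RInt_mono.
  change (RInt (Iop c tc j) c t) with (Iop c tc (S j) t).
  unfold ui, al, be, ga. rewrite fi_S. match goal with |- ?x = ?y => change (x = y :> R) end. set (A1 := Iop a sc j r). set (A2 := Iop c tc (S j) t). set (A3 := (t - c) ^ S j). set (A4 := (r-a)^j). set (F := fi j). set (Sj := INR (S j)).
  assert (F <> 0) by apply fi_nz. assert (Sj <> 0) by (apply not_0_INR; lia). clearbody A1 A2 A3 A4 F Sj. field. auto.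
  all: apply ex_RInt_c; intros x; cont1 Hc.
Qed.

Lemma ui_int j s t : C * RInt (fun r => ui j r t) a s = u (S j) s t.
Proof.
  set (al := C ^ j * (t - c) ^ (S j) / fi (S j)).
  set (be := C ^ j * Iop c tc (S j) t / fi j).
  set (ga := C ^ j * p0 * (t - c) ^ (S j) / (fi j * fi (S j))).
  replace (fun r => ui j r t) with (fun r => (al * Iop a sc j r + be * (r - a) ^ j) - ga * (r - a) ^ j).
  2:{ apply functional_extensionality. intros w. unfold ui, al, be, ga. field. split; apply fi_nz. }
  pose proof (Iop_cont a sc sc_cont j) as Hc.
  rewrite RInt_minus'. rewrite RInt_plus'. rewrite !RInt_scal'. rewrite RInt_mono.
  change (RInt (Iop a sc j) a s) with (Iop a sc (S j) s).
  unfold u, al, be, ga. rewrite fi_S. match goal with |- ?x = ?y => change (x = y :> R) end. simpl pow.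
  set (A1 := Iop a sc (S j) s). set (A2 := Iop c tc (S j) t). set (A3 := (t - c) ^ j). set (A4 := (s-a)^j). set (F := fi j). set (Sj := INR (S j)).
  assert (F <> 0) by apply fi_nz. assert (Sj <> 0) by (apply not_0_INR; lia). clearbody A1 A2 A3 A4 F Sj. field. auto.
  all: apply ex_RInt_c; intros x; cont1 Hc.
Qed.

Lemma u0 s t : u 0 s t = sc s + tc t - p0.
Proof. unfold u, fi. simpl. field. Qed.

Definition Dn N r w := K r w - sl (fun j => u j r w) N.

Lemma Dn_int N r t : RInt (fun w => Dn N r w) c t = RInt (fun w => K r w) c t - sl (fun j => ui j r t) N.
Proof.
  unfold Dn. rewrite RInt_minus'. rewrite (RInt_sl (fun j w => u j r w)).
  f_equal. f_equal. apply functional_extensionality. intros j. apply u_int.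
  intros j. apply u_cont_w. apply ex_RInt_c. apply cK_w.
  apply ex_RInt_c. apply (sl_cont (fun j w => u j r w)). intros j; apply u_cont_w.
Qed.

Lemma Dn_cont_w N r : allc (fun w => Dn N r w).
Proof. intros x. unfold Dn. apply c_minus. apply cK_w. apply (sl_cont (fun j w => u j r w)). intros j; apply u_cont_w. Qed.

Lemma Dnint_cont N t : c <= t -> allc (fun r => RInt (fun w => Dn N r w) c t).
Proof.
  intros Ht x. replace (fun r => RInt (fun w => Dn N r w) c t) with
    (fun r => RInt (fun w => K r w) c t - sl (fun j => ui j r t) N).
  2:{ apply functional_extensionality. intros r. rewrite Dn_int. reflexivity. }
  apply c_minus. apply Kint_cont; auto. apply (sl_cont (fun j r => ui j r t)). intros j; apply ui_cont_r.
Qed.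

Hypothesis HG : forall s t, a <= s <= b -> c <= t <= d ->
  K s t = sc s + tc t - p0 + C * RInt (fun r => RInt (fun w => K r w) c t) a s.

Lemma Neumann N s t : a <= s <= b -> c <= t <= d ->
  Dn (S N) s t = C * RInt (fun r => RInt (fun w => Dn N r w) c t) a s.
Proof.
  intros Hs Ht.
  replace (fun r => RInt (fun w => Dn N r w) c t) with
    (fun r => RInt (fun w => K r w) c t - sl (fun j => ui j r t) N).
  2:{ apply functional_extensionality. intros r. rewrite Dn_int. reflexivity. }
  rewrite RInt_minus'. rewrite (RInt_sl (fun j r => ui j r t)).
  2:{ intros j; apply ui_cont_r. }
  2:{ apply ex_RInt_c. apply Kint_cont. lra. }
  2:{ apply ex_RInt_c. apply (sl_cont (fun j r => ui j r t)). intros j; apply ui_cont_r. }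
  rewrite Rmult_minus_distr_l. rewrite sl_scal.
  replace (sl (fun j => C * RInt (fun r => ui j r t) a s) N) with (sl (fun j => u (S j) s t) N).
  2:{ f_equal. apply functional_extensionality. intros j. rewrite ui_int. reflexivity. }
  unfold Dn. rewrite sl_shift. rewrite u0. rewrite (HG s t Hs Ht). ring.
Qed.

Lemma Dn_bound B : (forall r w, Rabs (K r w) <= B) -> forall N s t, a <= s <= b -> c <= t <= d ->
  Rabs (Dn N s t) <= B * Rabs C ^ N * ((s - a) ^ N * (t - c) ^ N) / (fi N * fi N).
Proof.
  intros HB N. induction N; intros s t Hs Ht.
  - unfold Dn, fi. simpl. rewrite Rminus_0_r. replace (B * 1 * (1 * 1) / (1 * 1)) with B by field. apply HB.
  - rewrite Neumann; auto. rewrite Rabs_mult.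
    set (g := fun r => (B * Rabs C ^ N * (t - c) ^ S N / (fi N * fi N * INR (S N))) * (r - a) ^ N).
    assert (Hin : forall r, a <= r <= s -> Rabs (RInt (fun w => Dn N r w) c t) <= g r).
    { intros r Hr. eapply Rle_trans. apply (RInt_abs_bound _ (fun w => (B * Rabs C ^ N * (r - a) ^ N / (fi N * fi N)) * (w - c) ^ N)).
      lra. apply ex_RInt_c; apply Dn_cont_w. apply ex_RInt_c. intros x. apply c_mult. apply c_const. apply c_pow.
      intros w Hw. eapply Rle_trans. apply IHN. lra. lra. right. field. apply fi_nz.
      rewrite RInt_scal'. rewrite RInt_mono. right. unfold g. field. split. apply not_0_INR; lia. apply fi_nz.
      apply ex_RInt_c. intros x. apply c_pow. }
    eapply Rle_trans. apply Rmult_le_compat_l. apply Rabs_pos.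
    apply (RInt_abs_bound _ g). lra. apply ex_RInt_c. apply Dnint_cont. lra.
    apply ex_RInt_c. intros x. unfold g. apply c_mult. apply c_const. apply c_pow. exact Hin.
    unfold g. rewrite RInt_scal'. rewrite RInt_mono. right. unfold fi. rewrite fact_simpl, mult_INR. simpl pow.
    field. repeat split; try apply INR_fact_neq_0; try (apply not_0_INR; lia).
    apply ex_RInt_c. intros x. apply c_pow.
Qed.

End Goursat.


Lemma fi_ge1 j : 1 <= fi j.
Proof. unfold fi. apply (le_INR 1). apply Factorial.lt_O_fact. Qed.
Lemma fi_pos j : 0 < fi j.
Proof. pose proof (fi_ge1 j). lra. Qed.

Lemma poly_bound p lo hi L r : lo <= r <= hi ->
  Rabs (poly p lo L r) <= sum_f_R0 (fun m => Rabs (p m) * (hi - lo) ^ m) L.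
Proof.
  intros Hr. unfold poly. eapply Rle_trans. apply sum_f_R0_triangle. apply sum_Rle.
  intros m _. rewrite Rabs_mult. apply Rmult_le_compat_l. apply Rabs_pos.
  rewrite <- RPow_abs. apply pow_incr. split. apply Rabs_pos. rewrite Rabs_pos_eq; lra.
Qed.

Lemma f_bound lo hi f : allc f -> exists M, 0 <= M /\ forall x, lo <= x <= hi -> Rabs (f x) <= M.
Proof.
  intros Hf. destruct (bounded_continuity (K:=R_AbsRing) (V:=R_NormedModule) f lo hi) as [M HM].
  intros x _. apply Hf.
  exists (Rabs M). split. apply Rabs_pos. intros x Hx. specialize (HM x Hx).
  change (norm (f x)) with (Rabs (f x)) in HM. pose proof (Rle_abs M). lra.
Qed.

Lemma Iop_glob (p : nat -> R) lo hi f : lo <= hi -> allc f ->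
  unif_conv_pseries p lo lo hi f ->
  exists H, 0 <= H /\ forall L j s, lo <= s <= hi ->
    Rabs (Iop lo f j s - Iop lo (poly p lo L) j s) <= H * (s - lo) ^ j / fi j.
Proof.
  intros Hl Hf Hu. destruct (Iop_series p lo hi f Hl Hf Hu 1 ltac:(lra)) as [L1 HL1].
  destruct (f_bound lo hi f Hf) as [M [HM0 HM]].
  set (S1 := sum_f_R0 (fun m => Rabs (p m) * (hi - lo) ^ m) L1).
  assert (HS1 : 0 <= S1).
  { unfold S1. apply cond_pos_sum. intros m. apply Rmult_le_pos. apply Rabs_pos. apply pow_le. lra. }
  exists (1 + M + S1). split. lra. intros L j s Hs.
  destruct (Compare_dec.le_lt_dec L1 L) as [HL|HL].
  - eapply Rle_trans. apply HL1; auto. unfold fi. apply Rmult_le_compat_r.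
    left. apply Rinv_0_lt_compat. apply INR_fact_lt_0.
    apply Rmult_le_compat_r. apply pow_le. lra. lra.
  - rewrite <- Iop_minus; auto. 2: apply poly_cont.
    eapply Rle_trans. apply (Iop_bound lo hi _ (M + S1)).
    intros x. apply c_minus. apply Hf. apply poly_cont.
    intros r Hr. unfold Rminus. eapply Rle_trans. apply Rabs_triang. rewrite Rabs_Ropp.
    apply Rplus_le_compat. apply HM; auto. eapply Rle_trans. apply poly_bound. exact Hr.
    unfold S1. apply sum_mono. intros m. apply Rmult_le_pos. apply Rabs_pos. apply pow_le. lra. lia.
    exact Hs. unfold fi. apply Rmult_le_compat_r.
    left. apply Rinv_0_lt_compat. apply INR_fact_lt_0.
    apply Rmult_le_compat_r. apply pow_le. lra. lra.
Qed.

Lemma coef_fin_diag p Cc Y x N :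
  sum_f_R0 (fun n => x ^ n * coef_fin p Cc Y n) N =
  sum_f_R0 (fun j => (Cc * Y) ^ j / fi j *
     sum_f_R0 (fun m => p m * (INR (Factorial.fact m) / INR (Factorial.fact (m + j))) * x ^ (m + j)) (N - j)) N.
Proof.
  set (g := fun j m => (Cc * Y) ^ j / fi j * (p m * (INR (Factorial.fact m) / INR (Factorial.fact (m + j))) * x ^ (m + j))).
  transitivity (sum_f_R0 (fun j => sum_f_R0 (fun m => g j m) (N - j)) N).
  2:{ apply sum_eq. intros j _. unfold g. rewrite scal_sum. apply sum_eq. intros. ring. }
  rewrite sum_diag. apply sum_eq. intros n _. unfold coef_fin. rewrite scal_sum.
  rewrite sum_rev. apply sum_eq. intros j Hj. unfold g.
  replace (n - j + j)%nat with n by lia. replace (n - (n - j))%nat with j by lia.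
  unfold fi. field. split; apply INR_fact_neq_0.
Qed.

Lemma rearr (p : nat -> R) lo hi f Cc Y : lo < hi -> 0 <= Y -> allc f ->
  unif_conv_pseries p lo lo hi f -> forall s, lo <= s <= hi ->
  forall eps, 0 < eps -> exists N0, forall N, (N0 <= N)%nat ->
  Rabs (sum_f_R0 (fun n => (s - lo) ^ n * coef_fin p Cc Y n - (Cc * Y) ^ n / fi n * Iop lo f n s) N) < eps.
Proof.
  intros Hl HY Hf Hu s Hs.
  set (rho := Rabs (Cc * Y) * (hi - lo)).
  assert (Hrho : 0 <= rho) by (unfold rho; apply Rmult_le_pos; [apply Rabs_pos | lra]).
  set (dd := fun N j => (Cc * Y) ^ j / fi j * (Iop lo (poly p lo (N - j)) j s - Iop lo f j s)).
  assert (Hid : forall N, sum_f_R0 (fun n => (s - lo) ^ n * coef_fin p Cc Y n - (Cc * Y) ^ n / fi n * Iop lo f n s) N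
                 = sum_f_R0 (dd N) N).
  { intros N. rewrite minus_sum. rewrite coef_fin_diag. rewrite <- minus_sum. apply sum_eq.
    intros j _. unfold dd. rewrite Iop_poly. ring. }
  assert (Hdd : forall N j e, (Rabs (Iop lo f j s - Iop lo (poly p lo (N - j)) j s) <= e * (s - lo) ^ j / fi j) ->
      0 <= e -> Rabs (dd N j) <= rho ^ j / INR (Factorial.fact j) * e).
  { intros N j e HL He. unfold dd. rewrite Rabs_mult. rewrite Rabs_minus_sym.
    pose proof (fi_pos j) as Hfp. assert (Hfi : 1 <= fi j) by apply fi_ge1.
    replace (Rabs ((Cc * Y) ^ j / fi j)) with (Rabs (Cc * Y) ^ j / fi j).
    2:{ unfold Rdiv. rewrite (Rabs_mult ((Cc * Y) ^ j)), Rabs_inv, <- RPow_abs. rewrite (Rabs_pos_eq (fi j)); lra. }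
    eapply Rle_trans. apply Rmult_le_compat_l. apply Rmult_le_pos. apply pow_le. apply Rabs_pos.
    left. apply Rinv_0_lt_compat. lra. apply HL.
    unfold rho. rewrite Rpow_mult_distr. fold (fi j).
    assert (Hx : (s - lo) ^ j <= (hi - lo) ^ j) by (apply pow_incr; lra).
    assert (0 <= (s - lo) ^ j) by (apply pow_le; lra).
    assert (0 <= Rabs (Cc * Y) ^ j) by (apply pow_le; apply Rabs_pos).
    unfold Rdiv.
    replace (Rabs (Cc * Y) ^ j * / fi j * (e * (s - lo) ^ j * / fi j)) with
      ((Rabs (Cc * Y) ^ j * e * / fi j) * ((s - lo) ^ j * / fi j)) by ring.
    replace (Rabs (Cc * Y) ^ j * (hi - lo) ^ j * / fi j * e) with
      ((Rabs (Cc * Y) ^ j * e * / fi j) * (hi - lo) ^ j) by ring.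
    apply Rmult_le_compat_l. apply Rmult_le_pos. apply Rmult_le_pos; auto. left; apply Rinv_0_lt_compat; auto.
    apply Rle_trans with ((s - lo) ^ j).
    rewrite <- (Rmult_1_r ((s - lo) ^ j)) at 2. apply Rmult_le_compat_l. auto.
    rewrite <- Rinv_1. apply Rinv_le_contravar; lra. exact Hx. }
  intros eps Heps.
  destruct (conv0 (fun j => rho ^ j / INR (Factorial.fact j)) dd (exp rho)) with (eps := eps) as [N0 HN0]; auto.
  - intros j. apply Rmult_le_pos. apply pow_le; auto. left; apply Rinv_0_lt_compat, INR_fact_lt_0.
  - intros N. apply exp_ge_taylor. exact Hrho.
  - apply cv_speed_pow_fact.
  - intros e He. destruct (Iop_series p lo hi f ltac:(lra) Hf Hu e He) as [L0 HL0].
    destruct (Iop_glob p lo hi f ltac:(lra) Hf Hu) as [H [H0 HH]].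
    exists L0, H. split.
    + intros N j _. apply Hdd; auto.
    + intros N j _ HLj. apply Hdd. apply HL0; auto. lra.
  - exists N0. intros N HN. rewrite Hid. apply HN0. exact HN.
Qed.

Lemma infsum_is_series (f : nat -> R) l :
  (forall eps, 0 < eps -> exists N, forall M, (N <= M)%nat -> Rabs (sum_f_R0 f M - l) < eps) ->
  is_series f l.
Proof.
  intros H. apply is_series_Reals. intros eps He. destruct (H eps He) as [N HN].
  exists N. intros M HM. unfold R_dist. apply HN. lia.
Qed.

Lemma final_gen (p q : nat -> R) lo hi lo' hi' f g Cc (F : R -> R) (p0v : R) :
  lo < hi -> lo' < hi' -> allc f -> allc g ->
  unif_conv_pseries p lo lo hi f -> unif_conv_pseries q lo' lo' hi' g ->
  p 0%nat = p0v -> q 0%nat = p0v ->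
  (forall x, lo <= x <= hi -> forall eps, 0 < eps -> exists N0, forall N, (N0 <= N)%nat ->
     Rabs (F x - sum_f_R0 (fun j => Cc ^ j * ((hi' - lo') ^ j / fi j * Iop lo f j x
        + (x - lo) ^ j / fi j * Iop lo' g j hi' - p0v * ((x - lo) ^ j * (hi' - lo') ^ j) / (fi j * fi j))) N) < eps) ->
  (forall n, is_series (coef_inf_term q Cc (hi' - lo') n)
      ((coef_fin p Cc (hi' - lo') n + Cc ^ n / fi n * (Iop lo' g n hi' - q 0%nat * (hi' - lo') ^ n / fi n))
        - coef_fin p Cc (hi' - lo') n)) /\
  (forall x, lo <= x <= hi -> is_series (fun n =>
      (coef_fin p Cc (hi' - lo') n + Cc ^ n / fi n * (Iop lo' g n hi' - q 0%nat * (hi' - lo') ^ n / fi n)) * (x - lo) ^ n) (F x)).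
Proof.
  intros Hl Hl' Hf Hg Hup Huq Hp0 Hq0 HF. set (Y := hi' - lo'). split.
  - intros n. apply infsum_is_series. intros eps He.
    set (cn := Cc ^ n / fi n).
    set (e' := eps / (Rabs cn * (Y ^ n / fi n) + 1)).
    assert (HYn : 0 <= Y ^ n / fi n) by (apply Rmult_le_pos; [apply pow_le; unfold Y; lra | left; apply Rinv_0_lt_compat, fi_pos]).
    assert (Hden : 0 < Rabs cn * (Y ^ n / fi n) + 1) by (pose proof (Rabs_pos cn); nra).
    assert (He' : 0 < e') by (apply Rdiv_lt_0_compat; lra).
    destruct (Iop_series q lo' hi' g ltac:(lra) Hg Huq e' He') as [L0 HL0].
    exists L0. intros M HM.
    specialize (HL0 (S M) ltac:(lia) n hi' ltac:(lra)).
    rewrite Iop_poly in HL0.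
    rewrite (decomp_sum _ (S M)) in HL0 by lia. simpl pred in HL0.
    replace (sum_f_R0 (coef_inf_term q Cc Y n) M) with
      (cn * sum_f_R0 (fun i => q (S i) * (INR (Factorial.fact (S i)) / INR (Factorial.fact (S i + n))) * (hi' - lo') ^ (S i + n)) M).
    2:{ rewrite scal_sum. apply sum_eq. intros i _. unfold coef_inf_term, cn, Y, fi.
        rewrite (Nat.add_comm n (S i)). field. split; apply INR_fact_neq_0. }
    set (Sm := sum_f_R0 _ M) in *.
    set (D := Iop lo' g n hi' - (q 0%nat * (INR (Factorial.fact 0) / INR (Factorial.fact (0 + n))) * (hi' - lo') ^ (0 + n) + Sm)) in *.
    replace (cn * Sm - (coef_fin p Cc Y n + cn * (Iop lo' g n hi' - q 0%nat * Y ^ n / fi n) - coef_fin p Cc Y n))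
      with (- (cn * D)).
    2:{ unfold D, Y, cn, fi. simpl. field. apply INR_fact_neq_0. }
    rewrite Rabs_Ropp, Rabs_mult.
    apply Rle_lt_trans with (Rabs cn * (e' * (Y ^ n / fi n))).
    { apply Rmult_le_compat_l. apply Rabs_pos. unfold Y, fi. unfold Rdiv in *. rewrite <- Rmult_assoc. exact HL0. }
    unfold e'. unfold Rdiv at 1.
    set (Z := Y ^ n / fi n) in *. set (A := Rabs cn) in *.
    replace (A * (eps * / (A * Z + 1) * Z)) with
      (eps * ((A * Z) / (A * Z + 1))) by (field; lra).
    rewrite <- (Rmult_1_r eps) at 2. apply Rmult_lt_compat_l. lra.
    apply (Rmult_lt_reg_r (A * Z + 1)). lra.
    unfold Rdiv. rewrite Rmult_assoc, Rinv_l by lra. lra.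
  - intros x Hx. apply infsum_is_series. intros eps He.
    destruct (HF x Hx (eps/2) ltac:(lra)) as [N1 HN1].
    destruct (rearr p lo hi f Cc Y Hl ltac:(unfold Y; lra) Hf Hup x Hx (eps/2) ltac:(lra)) as [N2 HN2].
    exists (N1 + N2)%nat. intros M HM.
    specialize (HN1 M ltac:(lia)). specialize (HN2 M ltac:(lia)).
    set (U := sum_f_R0 _ M) in HN1. set (V := sum_f_R0 _ M) in HN2.
    replace (sum_f_R0 _ M) with (U + V).
    2:{ unfold U, V. rewrite <- plus_sum. apply sum_eq. intros j _. rewrite Hq0, <- Hp0.
        rewrite Rpow_mult_distr. unfold Y. field. apply fi_nz. }
    replace (U + V - F x) with (V - (F x - U)) by ring.
    eapply Rle_lt_trans. apply Rabs_triang. rewrite Rabs_Ropp. lra.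
Qed.


Lemma sum_at0 (p : nat -> R) x0 N : sum_f_R0 (fun j => p j * (x0 - x0) ^ j) N = p 0%nat.
Proof. induction N. simpl. ring. rewrite sumS, IHN. rewrite Rminus_diag. simpl. ring. Qed.

Lemma uc_at0 p x0 hi f : x0 <= hi -> unif_conv_pseries p x0 x0 hi f -> f x0 = p 0%nat.
Proof.
  intros Hx Hu. destruct (Req_dec (f x0) (p 0%nat)) as [E|E]; auto.
  assert (Hp : 0 < Rabs (p 0%nat - f x0)) by (apply Rabs_pos_lt; intros Z; apply E; lra).
  destruct (Hu _ Hp) as [N HN]. specialize (HN N (le_n N) x0 ltac:(lra)).
  rewrite sum_at0 in HN. lra.
Qed.

Lemma uc_ext p x0 lo hi f g : (forall x, lo <= x <= hi -> f x = g x) ->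
  unif_conv_pseries p x0 lo hi f -> unif_conv_pseries p x0 lo hi g.
Proof.
  intros H Hu eps He. destruct (Hu eps He) as [N HN]. exists N. intros n Hn x Hx.
  rewrite <- H; auto.
Qed.

Lemma bound_helper B Cm x y X Yb m : 0 <= x <= X -> 0 <= y <= Yb -> 0 <= B ->
  B * Rabs Cm ^ m * (x ^ m * y ^ m) / (fi m * fi m) <= B * (Rabs Cm * X * Yb) ^ m / fi m.
Proof.
  intros Hx Hy HB. rewrite !Rpow_mult_distr.
  pose proof (fi_ge1 m). pose proof (fi_pos m).
  assert (0 <= x ^ m * y ^ m) by (apply Rmult_le_pos; apply pow_le; lra).
  assert (x ^ m * y ^ m <= X ^ m * Yb ^ m) by (apply Rmult_le_compat; try (apply pow_le; lra); apply pow_incr; lra).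
  assert (0 <= B * Rabs Cm ^ m / fi m) by (apply Rmult_le_pos; [apply Rmult_le_pos; [lra | apply pow_le, Rabs_pos] | left; apply Rinv_0_lt_compat; lra]).
  replace (B * Rabs Cm ^ m * (x ^ m * y ^ m) / (fi m * fi m)) with
    ((B * Rabs Cm ^ m / fi m) * ((x ^ m * y ^ m) / fi m)) by (field; lra).
  replace (B * (Rabs Cm ^ m * X ^ m * Yb ^ m) / fi m) with
    ((B * Rabs Cm ^ m / fi m) * (X ^ m * Yb ^ m)) by (field; lra).
  apply Rmult_le_compat_l; auto.
  apply Rle_trans with (x ^ m * y ^ m); auto.
  unfold Rdiv. rewrite <- (Rmult_1_r (x ^ m * y ^ m)) at 2. apply Rmult_le_compat_l; auto.
  rewrite <- Rinv_1. apply Rinv_le_contravar; lra.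
Qed.

Lemma neumann_lim a b c d C k : a < b -> c < d -> cont_on_rect k a b c d ->
  (forall s t, a <= s <= b -> c <= t <= d ->
     K a b c d k s t = sc a b c d k s + tc a b c d k t - p0 a b c d k
        + C * RInt (fun r => RInt (fun w => K a b c d k r w) c t) a s) ->
  forall s t, a <= s <= b -> c <= t <= d -> forall eps, 0 < eps -> exists N0, forall N, (N0 <= N)%nat ->
    Rabs (K a b c d k s t - sum_f_R0 (fun j => u a b c d C k j s t) N) < eps.
Proof.
  intros Hab Hcd Hc HG s t Hs Ht eps He.
  destruct (K_bound a b c d k Hab Hcd Hc) as [B HB].
  assert (HB0 : 0 <= B) by (specialize (HB a c); pose proof (Rabs_pos (K a b c d k a c)); lra).
  set (rho := Rabs C * (b - a) * (d - c)).
  destruct (cv_speed_pow_fact rho (eps / (B + 1)) ltac:(apply Rdiv_lt_0_compat; lra)) as [N0 HN0].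
  exists N0. intros N HN.
  rewrite <- sl_sum. change (K a b c d k s t - sl (fun j => u a b c d C k j s t) (S N)) with (Dn a b c d C k (S N) s t).
  eapply Rle_lt_trans. apply (Dn_bound a b c d C k Hab Hcd Hc HG B HB); auto.
  eapply Rle_lt_trans. apply (bound_helper B C (s - a) (t - c) (b - a) (d - c)); [split; lra | split; lra | lra].
  specialize (HN0 (S N) ltac:(lia)). unfold R_dist in HN0. rewrite Rminus_0_r in HN0.
  assert (0 <= rho ^ S N / INR (Factorial.fact (S N))).
  { apply Rmult_le_pos. apply pow_le. unfold rho. apply Rmult_le_pos. apply Rmult_le_pos. apply Rabs_pos. lra. lra.
    left. apply Rinv_0_lt_compat, INR_fact_lt_0. }
  rewrite Rabs_pos_eq in HN0 by auto. fold rho. unfold fi.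
  replace (B * rho ^ S N / INR (Factorial.fact (S N))) with (B * (rho ^ S N / INR (Factorial.fact (S N)))) by (unfold Rdiv; ring).
  apply Rle_lt_trans with ((B + 1) * (rho ^ S N / INR (Factorial.fact (S N)))). nra.
  apply (Rmult_lt_compat_l (B + 1)) in HN0. 2: lra.
  replace ((B + 1) * (eps / (B + 1))) with eps in HN0 by (field; lra). exact HN0.
Qed.

Theorem mainTheorem1 (a b c d C : R) (p q : nat -> R) (sigma tau : R -> R)
    (k : R -> R -> R) :
  a < b -> c < d -> C <> 0 ->
  p 0%nat = q 0%nat ->
  unif_conv_pseries p a a b sigma ->
  unif_conv_pseries q c c d tau ->
  goursat_solution C a b c d sigma tau k ->
  exists pt qt : nat -> R,
    (forall n : nat,
       is_series (coef_inf_term q C (d - c) n) (pt n - coef_fin p C (d - c) n)) /\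
    (forall n : nat,
       is_series (coef_inf_term p C (b - a) n) (qt n - coef_fin q C (b - a) n)) /\
    (forall s : R, a <= s <= b ->
       is_series (fun n => pt n * (s - a) ^ n) (k s d)) /\
    (forall t : R, c <= t <= d ->
       is_series (fun n => qt n * (t - c) ^ n) (k b t)).
Proof.
  intros Hab Hcd HC Hpq Hu1 Hu2 [Hcont Heq].
  assert (Hsa : sigma a = p 0%nat) by (apply (uc_at0 p a b); auto; lra).
  assert (Htc : tau c = q 0%nat) by (apply (uc_at0 q c d); auto; lra).
  assert (Hsig : forall s, a <= s <= b -> sigma s = k s c).
  { intros s Hs. rewrite (Heq s c Hs ltac:(lra)).
    replace (fun r => RInt (fun w => k r w) c c) with (fun r : R => 0).
    2:{ apply functional_extensionality. intros r. rewrite RInt_point. reflexivity. }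
    rewrite RInt_const. change (scal (s - a) 0) with ((s - a) * 0). lra. }
  assert (Htau : forall t, c <= t <= d -> tau t = k a t).
  { intros t Ht. rewrite (Heq a t ltac:(lra) Ht). assert (HZ0 : forall f : R -> R, RInt f a a = 0) by (intros f; exact (RInt_point (V:=R_CompleteNormedModule) a f)). rewrite HZ0. ring. }
  set (KK := K a b c d k).
  assert (Hsc : forall s, a <= s <= b -> sc a b c d k s = sigma s).
  { intros s Hs. unfold sc. rewrite K_eq; auto. rewrite Hsig; auto. lra. }
  assert (Htc' : forall t, c <= t <= d -> tc a b c d k t = tau t).
  { intros t Ht. unfold tc. rewrite K_eq; auto. rewrite Htau; auto. lra. }
  assert (Hp0 : p0 a b c d k = p 0%nat).
  { unfold p0. rewrite K_eq; try lra. rewrite <- Hsig; auto. lra. }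
  assert (HG : forall s t, a <= s <= b -> c <= t <= d ->
     K a b c d k s t = sc a b c d k s + tc a b c d k t - p0 a b c d k
        + C * RInt (fun r => RInt (fun w => K a b c d k r w) c t) a s).
  { intros s t Hs Ht. rewrite K_eq; auto. rewrite Heq; auto. rewrite Hsc, Htc', Hp0, <- Hsa; auto.
    f_equal. f_equal. apply RInt_ext. intros x Hx.
    rewrite Rmin_left, Rmax_right in Hx by lra.
    apply RInt_ext. intros w Hw. rewrite Rmin_left, Rmax_right in Hw by lra.
    rewrite K_eq; auto; lra. }
  pose proof (neumann_lim a b c d C k Hab Hcd Hcont HG) as HN.
  assert (Hu1' : unif_conv_pseries p a a b (sc a b c d k)).
  { apply (uc_ext p a a b sigma); auto. intros; rewrite Hsc; auto. }
  assert (Hu2' : unif_conv_pseries q c c d (tc a b c d k)).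
  { apply (uc_ext q c c d tau); auto. intros; rewrite Htc'; auto. }
  destruct (final_gen p q a b c d (sc a b c d k) (tc a b c d k) C (fun s => k s d) (p0 a b c d k)
     Hab Hcd (sc_cont a b c d k Hab Hcd Hcont) (tc_cont a b c d k Hab Hcd Hcont) Hu1' Hu2'
     ltac:(auto) ltac:(rewrite Hp0; auto)) as [A1 A2].
  { intros x Hx eps He. destruct (HN x d Hx ltac:(lra) eps He) as [N0 HN0].
    exists N0. intros N HNN. specialize (HN0 N HNN). rewrite K_eq in HN0 by lra. exact HN0. }
  destruct (final_gen q p c d a b (tc a b c d k) (sc a b c d k) C (fun t => k b t) (p0 a b c d k)
     Hcd Hab (tc_cont a b c d k Hab Hcd Hcont) (sc_cont a b c d k Hab Hcd Hcont) Hu2' Hu1'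
     ltac:(rewrite Hp0; auto) ltac:(auto)) as [B1 B2].
  { intros x Hx eps He. destruct (HN b x ltac:(lra) Hx eps He) as [N0 HN0].
    exists N0. intros N HNN. specialize (HN0 N HNN). rewrite K_eq in HN0 by lra.
    erewrite sum_eq. exact HN0. intros j _. unfold u. match goal with |- ?x = ?y => change (x = y :> R) end. unfold Rdiv. ring. }
  eexists. eexists. split. exact A1. split. exact B1. split. exact A2. exact B2.
Qed.
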